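(* Let $\mathcal{A}$ be a complete topological ring and let $\varphi\colon\mathcal{A}\rightarrow\mathcal{B}$ be a complete topological $\mathcal{A}$-algebra. Let $\mathfrak{S}=\mathrm{Spf}(\mathcal{A})$ and let $f\colon\mathfrak{X}=\mathrm{Spf}(\mathcal{B})\rightarrow\mathfrak{S}$ be the corresponding affine ind-scheme and affine ind-$\mathfrak{S}$-scheme. Then actions $\mathbb{G}_{a,\mathfrak{S}}\widehat{\times}_{\mathfrak{S}}\mathfrak{X}\rightarrow\mathfrak{X}$ of the additive group ind-scheme $\mathbb{G}_{a,\mathfrak{S}}$ on $\mathfrak{X}$ are in one-to-one correspondence with topologically integrable iterated higher $\mathcal{A}$-derivations $D=\{D^{(i)}\}_{i\geq 0}$ of $\mathcal{B}$.
   Context: Conventions: all topological abelian groups, rings and modules are linearly topologized and admit a countable fundamental system of neighbourhoods of $0$ consisting of open subgroups (resp. open ideals, open submodules); homomorphisms of topological rings/modules are continuous homomorphisms. The separated completion of a topological ring $\mathcal{A}$ is $\widehat{\mathcal{A}}=\varprojlim_{\mathfrak{a}}\mathcal{A}/\mathfrak{a}$ ($\mathfrak{a}$ running over open ideals, each quotient discrete) with the inverse limit topology; $\mathcal{A}$ is complete if the canonical map $\mathcal{A}\to\widehat{\mathcal{A}}$ is an isomorphism of topological rings. A complete topological $\mathcal{A}$-algebra is a complete topological ring $\mathcal{B}$ with a continuous ring homomorphism $\mathcal{A}\to\mathcal{B}$. Restricted power series: for a complete topological ring $\mathcal{B}$, $\mathcal{B}\{T_1,\dots,T_r\}$ is the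 subring of $\mathcal{B}[[T_1,\dots,T_r]]$ of series $\sum_I b_IT^I$ whose coefficients converge to $0$ (for every open ideal $\mathfrak{b}$, all but finitely many $b_I$ lie in $\mathfrak{b}$), with the topology whose fundamental system of open ideals consists of the series with all coefficients in $\mathfrak{b}$, $\mathfrak{b}$ open in $\mathcal{B}$; equivalently $\mathcal{B}\{T_1,\dots,T_r\}=\varprojlim_{\mathfrak{b}}(\mathcal{B}/\mathfrak{b})[T_1,\dots,T_r]$. Affine ind-schemes: for a complete topological ring $\mathcal{A}$, $\mathrm{Spf}(\mathcal{A})$ is the set of open prime ideals of $\mathcal{A}$ with the topology induced by the Zariski topology of $\mathrm{Spec}(\mathcal{A})$, equipped with the sheaf of topological rings $\mathcal{O}_{\mathrm{Spf}(\mathcal{A})}=\varprojlim_n (j_n)_*\mathcal{O}_{\mathrm{Spec}(\mathcal{A}/\mathfrak{a}_n)}$ (restricted to $\mathrm{Spf}(\mathcal{A})$), where $(\mathfrak{a}_n)$ is a fundamental system of open ideals and $j_n\colon\mathrm{Spec}(\mathcal{A}/\mathfrak{a}_n)\to\mathrm{Spec}(\mathcal{A})$ the closed immersions; it is a locally topologically ringed space with global sections $\mathcal{A}$. Affine ind-schemes are locally topologically ringed spaces isomorphic to some $\mathrm{Spf}(\mathcal{A})$, and morphisms between them are the morphisms $\mathrm{Spf}(\varphi)$ induced by continuous ring homomorphisms $\varphi$; for $\mathfrak{S}=\mathrm{Spf}(\mathcal{A})$, the category of affine ind-$\mathfrak{S}$-schemes is thereby anti-equivalent to the category of complete topological $\mathcal{A}$-algebras,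 and the fibre product $\mathrm{Spf}(\mathcal{B})\widehat{\times}_{\mathfrak{S}}\mathrm{Spf}(\mathcal{B}')$ is $\mathrm{Spf}(\mathcal{B}\widehat{\otimes}_{\mathcal{A}}\mathcal{B}')$, where $\widehat{\otimes}$ is the completed tensor product (separated completion of $\mathcal{B}\otimes_{\mathcal{A}}\mathcal{B}'$ for the topology generated by $U\otimes\mathcal{B}'+\mathcal{B}\otimes V$, $U,V$ open ideals). The additive group ind-scheme $\mathbb{G}_{a,\mathfrak{S}}$ is $\mathrm{Spf}(\mathcal{A}\{T\})$ with group law $\mathrm{Spf}(m)$, $m\colon\mathcal{A}\{T\}\to\mathcal{A}\{T,T'\}$, $T\mapsto T+T'$, and neutral section $\mathrm{Spf}(\epsilon)$, $\epsilon\colon\mathcal{A}\{T\}\to\mathcal{A}$, $T\mapsto 0$; one has $\mathbb{G}_{a,\mathfrak{S}}\widehat{\times}_{\mathfrak{S}}\mathrm{Spf}(\mathcal{B})\cong\mathrm{Spf}(\mathcal{B}\{T\})$. An action is a morphism of affine ind-$\mathfrak{S}$-schemes $\mu\colon\mathbb{G}_{a,\mathfrak{S}}\widehat{\times}_{\mathfrak{S}}\mathfrak{X}\to\mathfrak{X}$ satisfying $\mu\circ(\mathrm{id}\times\mu)=\mu\circ(m\times\mathrm{id})$ and $\mu\circ(\mathrm{Spf}(\epsilon)\times\mathrm{id})=$ the canonical isomorphism $\mathfrak{S}\widehat{\times}_{\mathfrak{S}}\mathfrak{X}\cong\mathfrak{X}$. Iterated higher derivations: a continuous iterated higher $\mathcal{A}$-derivation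 of $\mathcal{B}$ is a family $D=\{D^{(i)}\}_{i\ge0}$ of continuous $\mathcal{A}$-module homomorphisms $D^{(i)}\colon\mathcal{B}\to\mathcal{B}$ with $D^{(0)}=\mathrm{id}_{\mathcal{B}}$, $D^{(i)}(bb')=\sum_{j=0}^iD^{(j)}(b)D^{(i-j)}(b')$, and $D^{(i)}\circ D^{(j)}=\binom{i+j}{i}D^{(i+j)}$. It is topologically integrable if the sequence $(D^{(i)})_{i}$ converges continuously to $0$: for every $b\in\mathcal{B}$ and every open ideal $\mathfrak{b}'$ of $\mathcal{B}$ there exist an open ideal $\mathfrak{b}$ and $n_0$ with $D^{(n)}(b+\mathfrak{b})\subseteq\mathfrak{b}'$ for all $n\ge n_0$. *)

(* Defs.v *)
(* Algebraic (anti-equivalent) rendering of Theorem 3.6: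
   affine ind-schemes Spf(A) are represented by their complete topological
   rings of global sections, and morphisms of affine ind-S-schemes by
   continuous A-algebra homomorphisms (anti-equivalence stated in the
   paper's conventions). *)
From HB Require Import structures.
From mathcomp Require Import all_boot all_order all_algebra.
Set Implicit Arguments. Unset Strict Implicit. Unset Printing Implicit Defensive.
Import Order.TTheory GRing.Theory.
Local Open Scope ring_scope.

Definition is_ideal (R : comPzRingType) (J : R -> Prop) : Prop :=
  [/\ J 0, (forall x y, J x -> J y -> J (x - y)) & (forall r x, J x -> J (r * x))].

(* The topology of R is given by a decreasing sequence of ideals (I n)_n,
   a fundamental system of open ideals: an ideal is open iff it contains
   some I n. *)
Definition lin_top (R : comPzRingType) (I : nat -> R -> Prop) : Prop :=
  (forall n, is_ideal (I n)) /\ (forall n x, I n.+1 x -> I n x).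

(* R -> lim_n R / I n is bijective: injective (separated) and surjective
   (every compatible family is the image of some element). *)
Definition complete_top (R : comPzRingType) (I : nat -> R -> Prop) : Prop :=
  lin_top I /\
  (forall x, (forall n, I n x) -> x = 0) /\
  (forall x : nat -> R, (forall n, I n (x n.+1 - x n)) ->
     exists y, forall n, I n (y - x n)).

Definition continuous_top (R S : comPzRingType) (IR : nat -> R -> Prop)
  (IS : nat -> S -> Prop) (f : R -> S) : Prop :=
  forall n, exists m, forall x, IR m x -> IS n (f x).

(** ** Restricted power series B{T} as coefficient sequences;
       B{T,T'} as double sequences (coefficient of T^i T'^j at (i,j)). *)

Section Series.
Variables (B : comPzRingType) (IB : nat -> B -> Prop).

Definition restricted (s : nat -> B) : Prop :=
  forall n, exists N, forall k, (N <= k)%N -> IB n (s k).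

Definition ps_mul (s t : nat -> B) : nat -> B :=
  fun k => \sum_(j < k.+1) s j * t (k - j)%N.

Definition ps_const (b : B) : nat -> B := fun k => if k == 0%N then b else 0.

(* pullback along  m x id : G_a x G_a x X -> G_a x X,  i.e. the continuous
   B-algebra map B{T} -> B{T,T'}, T |-> T + T'. *)
Definition pull_m_id (s : nat -> B) : nat -> nat -> B :=
  fun i j => 'C(i + j, i)%:R * s (i + j)%N.

(* pullback along  id x mu : G_a x (G_a x X) -> G_a x X, where mu^# : B -> B{T'}
   acts on coefficients:  sum_i a_i T^i |-> sum_i mu^#(a_i)(T') T^i. *)
Definition pull_id_mu (mu : B -> nat -> B) (s : nat -> B) : nat -> nat -> B :=
  fun i j => mu (s i) j.

(* pullback along  eps x id : S x X -> G_a x X, i.e. B{T} -> B, T |-> 0 *)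
Definition pull_eps (s : nat -> B) : B := s 0%N.
End Series.

(** ** G_a-actions, given by the comorphism mu^# : B -> B{T} *)

Definition is_Ga_action (A B : comPzRingType) (IA : nat -> A -> Prop)
  (IB : nat -> B -> Prop) (phi : {rmorphism A -> B}) (mu : B -> nat -> B) : Prop :=
  (forall b, restricted IB (mu b)) /\
  (forall b b' k, mu (b - b') k = mu b k - mu b' k) /\
  (forall b b', mu (b * b') = ps_mul (mu b) (mu b')) /\
  mu 1 = ps_const 1 /\
  (forall a, mu (phi a) = ps_const (phi a)) /\
  (forall n, exists m, forall b, IB m b -> forall k, IB n (mu b k)) /\
  (* mu o (id x mu) = mu o (m x id) *)
  (forall b, pull_id_mu mu (mu b) = pull_m_id (mu b)) /\
  (* mu o (eps x id) = canonical isomorphism S x X = X *)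
  (forall b, pull_eps (mu b) = b).

Definition is_top_int_ihd (A B : comPzRingType) (IA : nat -> A -> Prop)
  (IB : nat -> B -> Prop) (phi : {rmorphism A -> B}) (D : nat -> B -> B) : Prop :=
  (forall i b b', D i (b + b') = D i b + D i b') /\
  (forall i a b, D i (phi a * b) = phi a * D i b) /\
  (forall i, continuous_top IB IB (D i)) /\
  (forall b, D 0%N b = b) /\
  (forall i b b', D i (b * b') = \sum_(j < i.+1) D j b * D (i - j)%N b') /\
  (forall i j b, D i (D j b) = 'C(i + j, i)%:R * D (i + j)%N b) /\
  (* topological integrability: (D^(i))_i converges continuously to 0 *)
  (forall b n, exists m n0, forall k, (n0 <= k)%N ->
      forall c, IB m c -> IB n (D k (b + c))).

(* Main.v *)
Require Import Defs.
From HB Require Import structures.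
From mathcomp Require Import all_boot all_order all_algebra.
From Stdlib Require Import FunctionalExtensionality.
Lemma funext {T U : Type} (f g : T -> U) : (forall x, f x = g x) -> f = g.
Proof. exact: functional_extensionality. Qed.
Import Order.TTheory GRing.Theory.
Set Implicit Arguments. Unset Strict Implicit.
Local Open Scope ring_scope.

Lemma binsym (i j : nat) : 'C(i + j, i) = 'C(j + i, j).
Proof. by rewrite addnC -bin_sub ?leq_addl // addnK. Qed.

Section Aux.
Variables (B : comPzRingType) (IB : nat -> B -> Prop) (hl : lin_top IB).

Lemma I0 n : IB n 0.
Proof. by case: (hl.1 n). Qed.

Lemma Isub n x y : IB n x -> IB n y -> IB n (x - y).
Proof. by case: (hl.1 n) => _ H _; apply: H. Qed.

Lemma Iadd n x y : IB n x -> IB n y -> IB n (x + y).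
Proof.
move=> hx hy; have := Isub hx (Isub (I0 n) hy).
by rewrite sub0r opprK.
Qed.

Lemma Imono m n x : (m <= n)%N -> IB n x -> IB m x.
Proof.
move=> le; elim: n le x => [|n IH]; first by rewrite leqn0 => /eqP ->.
rewrite leq_eqVlt => /orP [/eqP -> //|]; rewrite ltnS => le x hx.
by apply: IH => //; apply: hl.2.
Qed.
End Aux.

Lemma add_of_sub (B : comPzRingType) (f : B -> B) :
  (forall b b', f (b - b') = f b - f b') -> forall b b', f (b + b') = f b + f b'.
Proof.
move=> H b b'.
have f0 : f 0 = 0 by have := H 0 0; rewrite !subrr.
have fN : forall x, f (- x) = - f x by move=> x; rewrite -sub0r H f0 sub0r.
by have := H b (- b'); rewrite opprK => ->; rewrite fN opprK.
Qed.

Lemma sub_of_add (B : comPzRingType) (f : B -> B) :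
  (forall b b', f (b + b') = f b + f b') -> forall b b', f (b - b') = f b - f b'.
Proof.
move=> H b b'.
have f0 : f 0 = 0 by apply: (@addrI _ (f 0)); rewrite -H !addr0.
have fN : forall x, f (- x) = - f x.
  by move=> x; apply: (@addrI _ (f x)); rewrite -H !subrr.
by rewrite H fN.
Qed.

Lemma D1_zero (B : comPzRingType) (D : nat -> B -> B) :
  (forall b, D 0%N b = b) ->
  (forall i b b', D i (b * b') = \sum_(j < i.+1) D j b * D (i - j)%N b') ->
  forall i, (0 < i)%N -> D i 1 = 0.
Proof.
move=> H0 HL.
suff: forall n i, (0 < i <= n)%N -> D i 1 = 0.
  by move=> H i hi; apply: (H i); rewrite hi leqnn.
elim=> [|n IH] i; first by case: i.
case: i => // i /andP [_ hi].
have := HL i.+1 1 1; rewrite mulr1 big_ord_recr /= big_ord_recl /= subn0 subnn H0.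
rewrite big1; last first.
  move=> j _; rewrite IH ?mul0r //= /bump /=.
  have := ltn_ord j => hj; exact: leq_trans hj hi.
rewrite addr0 mul1r mulr1 => E.
by apply: (@addrI _ (D i.+1 1)); rewrite addr0 -E.
Qed.

Theorem theorem3p6 (A B : comPzRingType) (IA : nat -> A -> Prop)
  (IB : nat -> B -> Prop) (phi : {rmorphism A -> B})
  (hA : complete_top IA) (hB : complete_top IB)
  (hphi : continuous_top IA IB phi) :
  (forall mu : B -> nat -> B, is_Ga_action IA IB phi mu ->
     is_top_int_ihd IA IB phi (fun i b => mu b i)) /\
  (forall D : nat -> B -> B, is_top_int_ihd IA IB phi D ->
     exists! mu : B -> nat -> B,
       is_Ga_action IA IB phi mu /\ (fun i b => mu b i) = D).
Proof.
have hl := hB.1.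
split.
  move=> mu [hr [hs [hm [h1 [hph [hc [hass heps]]]]]]].
  have hadd : forall i b b', mu (b + b') i = mu b i + mu b' i.
    by move=> i; apply: (add_of_sub (f := fun b => mu b i)).
  split; first exact: hadd.
  split.
    move=> i a b; rewrite hm hph /ps_mul big_ord_recl big1 ?addr0.
      by rewrite /ps_const /= subn0.
    by move=> j _; rewrite /ps_const /= mul0r.
  split.
    by move=> i n; case: (hc n) => m hm'; exists m => x hx; apply: hm'.
  split; first exact: heps.
  split; first by move=> i b b'; rewrite hm.
  split.
    move=> i j b; have := congr1 (fun f => f j i) (hass b).
    by rewrite /pull_id_mu /pull_m_id /= => ->; rewrite binsym addnC.
  move=> b n; case: (hr b n) => N hN; case: (hc n) => m hm'.
  exists m, N => k hk c hcm; rewrite hadd; apply: Iadd => //; first exact: hN.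
  exact: hm'.
move=> D [hadd [hlin [hcont [h0 [hleib [hcomp hint]]]]]].
have hD1 := D1_zero h0 hleib.
have act : is_Ga_action IA IB phi (fun b i => D i b).
  split.
    move=> b n; case: (hint b n) => m [n0 H]; exists n0 => k hk.
    by have := H k hk 0 (I0 hl m); rewrite addr0.
  split; first by move=> b b' k; apply: (sub_of_add (f := D k)).
  split; first by move=> b b'; apply: funext => k; rewrite hleib.
  split.
    apply: funext => k; rewrite /ps_const; case: k => [|k] /=; first exact: h0.
    exact: hD1.
  split.
    move=> a; apply: funext => k; rewrite /ps_const; case: k => [|k] /=; first exact: h0.
    by rewrite -[phi a]mulr1 hlin hD1 ?mulr0.
  split.
    move=> n; case: (hint 0 n) => m0 [n0 H].
    have: exists m, forall b, IB m b -> forall k, (k < n0)%N -> IB n (D k b).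
      elim: n0 {H} => [|n0 [m IH]]; first by exists 0%N.
      case: (hcont n0 n) => m' hm'; exists (maxn m m') => b hb k.
      rewrite ltnS leq_eqVlt => /orP [/eqP ->|hk].
        by apply: hm'; apply: Imono hb => //; rewrite leq_maxr.
      by apply: IH => //; apply: Imono hb => //; rewrite leq_maxl.
    case=> m1 H1; exists (maxn m0 m1) => b hb k.
    case: (ltnP k n0) => hk; first by apply: H1 => //; apply: Imono hb; rewrite ?leq_maxr.
    by have := H k hk b (Imono hl (leq_maxl _ _) hb); rewrite add0r.
  split.
    move=> b; apply: funext => i; apply: funext => j.
    by rewrite /pull_id_mu /pull_m_id hcomp binsym addnC.
  by move=> b; rewrite /pull_eps h0.
exists (fun b i => D i b); split; first by split.
by move=> mu [_ <-].
Qed.
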